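(* Let $G$ be a finite simple graph on $[d]$, $k\ge1$, and let $f,g$ be $k$-colorings of an induced subgraph $G_0$ of $G$. The following are equivalent: (i) $f\sim_k g$ (as $k$-colorings of $G_0$); (ii) ${\bf x}_f-{\bf x}_g\in\langle [I_G]_2\rangle$; (iii) ${\bf x}_f-{\bf x}_g\in J_G$.
   Context: A $k$-coloring of a graph $H$ is a map $f:V(H)\to[k]$ (not necessarily surjective) with $f(u)\neq f(v)$ for every edge. A Kempe switching: for colors $i<j$ and a connected component $C$ of $H[f^{-1}(i)\cup f^{-1}(j)]$, interchange $i$ and $j$ on $C$. $f\sim_k g$ if $g$ is obtained from $f$ by a finite sequence of Kempe switchings (through $k$-colorings of $H$). A stable set of $G$ is a subset of $[d]$ with no edge of $G$ (including $\emptyset$ and singletons); $S(G)$ is the set of stable sets; $R[G]=\mathbb{K}[x_S : S\in S(G)]$ over a field $\mathbb{K}$, all variables of degree $1$. For a $k$-coloring $f$ of an induced subgraph $G[W]$, ${\bf x}_f=\prod_{\ell=1}^k x_{f^{-1}(\ell)}$. $I_G$ is the kernel of $\pi:R[G]\to\mathbb{K}[t_1,\dots,t_d,s]$, $\pi(x_S)=s\prod_{j\in S}t_j$; $\langle [I_G]_2\rangle$ is the ideal generated by the degree-$2$ homogeneous elements of $I_G$. $J_G$ is the ideal generated by all ${\bf x}_f-{\bf x}_g$ with $f,g$ $2$-colorings of a common induced subgraph of $G$. *)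

(* Defs.v *)
From HB Require Import structures.
From mathcomp Require Import all_boot all_order all_algebra.
From mathcomp Require Import mpoly.
From Stdlib Require Import Relations.
Set Implicit Arguments. Unset Strict Implicit. Unset Printing Implicit Defensive.
Import GRing.Theory.
Local Open Scope ring_scope.

(* A finite simple graph G on [d] is a symmetric irreflexive relation
   e : rel 'I_d (vertex j+1 of the paper is the ordinal j). *)

Section Defs.
Variables (d : nat) (e : rel 'I_d).

Definition stableb (S : {set 'I_d}) : bool :=
  [forall u, forall v, (u \in S) && (v \in S) ==> ~~ e u v].

Definition stable_set := {S : {set 'I_d} | stableb S}.

Definition nS := #|{: stable_set}|.

(* R[G] = K[x_S : S in S(G)] *)
Definition RG (K : fieldType) := {mpoly K[nS]}.

(* the variable x_S; for a non-stable set A (never used below) the junk value 0 *)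
Definition xvar (K : fieldType) (A : {set 'I_d}) : {mpoly K[nS]} :=
  if insub A is Some S0 then 'X_(enum_rank (S0 : stable_set)) else 0.

(* f : 'I_d -> 'I_k is a k-coloring of the induced subgraph G[W]
   (only its values on W are relevant) *)
Definition coloring (k : nat) (W : {set 'I_d}) (f : 'I_d -> 'I_k) : Prop :=
  forall u v, u \in W -> v \in W -> e u v -> f u != f v.

Definition xmon (K : fieldType) (k : nat) (W : {set 'I_d}) (f : 'I_d -> 'I_k)
  : {mpoly K[nS]} :=
  \prod_(l < k) xvar K [set v in W | f v == l].

(* the map pi : R[G] -> K[t_1..t_d, s]; t_j = 'X_(widen j), s = 'X_(ord_max) *)
Definition pi_img (K : fieldType) (S0 : stable_set) : {mpoly K[d.+1]} :=
  'X_(@ord_max d) * \prod_(j in val S0) 'X_(widen_ord (leqnSn d) j).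

Definition pi (K : fieldType) (p : {mpoly K[nS]}) : {mpoly K[d.+1]} :=
  comp_mpoly [tuple pi_img K (enum_val i) | i < nS] p.

Definition in_IG (K : fieldType) (p : {mpoly K[nS]}) : Prop := pi p = 0.

Definition IG2 (K : fieldType) (p : {mpoly K[nS]}) : Prop :=
  p \is 2.-homog /\ in_IG p.

Definition JG_gen (K : fieldType) (p : {mpoly K[nS]}) : Prop :=
  exists (W : {set 'I_d}) (f g : 'I_d -> 'I_2),
    [/\ coloring W f, coloring W g & p = xmon K W f - xmon K W g].

End Defs.

Definition in_ideal_gen (R : comNzRingType) (P : R -> Prop) (x : R) : Prop :=
  exists (n : nat) (c g : 'I_n -> R),
    (forall i, P (g i)) /\ x = \sum_(i < n) c i * g i.

Section Kempe.
Variables (d : nat) (e : rel 'I_d) (k : nat) (W : {set 'I_d}).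

(* one Kempe switching of the k-coloring f of G[W], yielding g (on W):
   colors i < j, C a connected component of G[W][f^-1(i) u f^-1(j)]
   (the component of some vertex x of that subgraph), colors i,j swapped on C *)
Definition kempe_step (f g : 'I_d -> 'I_k) : Prop :=
  exists (i j : 'I_k) (x : 'I_d),
    let V := [set v in W | (f v == i) || (f v == j)] in
    let C := [set y | connect [rel u v | [&& u \in V, v \in V & e u v]] x y] in
    [/\ (i < j)%N, x \in V,
        forall v, v \in W ->
          g v = if v \in C then (if f v == i then j else i) else f v
      & coloring e W g].

(* f ~_k g : g is obtained from f by finitely many Kempe switchings
   (equality of colorings of G[W] = agreement on W) *)
Definition kempe_equiv (f g : 'I_d -> 'I_k) : Prop :=
  exists2 h, clos_refl_trans _ kempe_step f h & {in W, h =1 g}.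

End Kempe.

(* Main.v *)
Require Import Defs.
From HB Require Import structures.
From mathcomp Require Import all_boot all_order all_algebra.
From mathcomp Require Import mpoly.
From mathcomp Require Import zify.
From Stdlib Require Import Relations ClassicalEpsilon.
Set Implicit Arguments. Unset Strict Implicit. Unset Printing Implicit Defensive.
Import GRing.Theory.

Module PA.
Local Open Scope ring_scope.

Definition cb (P : Prop) : bool := if excluded_middle_informative P then true else false.
Lemma cbP (P : Prop) : reflect P (cb P).
Proof. by rewrite /cb; case: excluded_middle_informative => h; constructor. Qed.

Section Main.
Variables (K : fieldType) (d : nat) (e : rel 'I_d).
Hypotheses (e_sym : ssrbool.symmetric e) (e_irr : ssrbool.irreflexive e).

Local Notation n := (nS e).

Lemma stable0 : stableb e set0.
Proof. by apply/forallP=> u; apply/forallP=> v; rewrite inE. Qed.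

Definition s0 : stable_set e := exist _ set0 stable0.
Definition rk (A : {set 'I_d}) : 'I_n := enum_rank (insubd s0 A).

Lemma xvarE A : stableb e A -> xvar e K A = 'X_(rk A).
Proof. by move=> sA; rewrite /xvar /rk /insubd insubT. Qed.

Lemma rk_val A : stableb e A -> val (enum_val (rk A)) = A.
Proof. by move=> sA; rewrite /rk enum_rankK /insubd insubT. Qed.

Lemma rk_inj A B : stableb e A -> stableb e B -> rk A = rk B -> A = B.
Proof. by move=> sA sB h; rewrite -(rk_val sA) -(rk_val sB) h. Qed.

Lemma val_stable (i : 'I_n) : stableb e (val (enum_val i)).
Proof. exact: valP. Qed.

Lemma rk_enum (i : 'I_n) : rk (val (enum_val i)) = i.
Proof.
rewrite /rk /insubd insubT ?val_stable // => h.
by rewrite /= -[RHS]enum_valK; congr enum_rank; apply: val_inj.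
Qed.

Definition cls k (W : {set 'I_d}) (h : 'I_d -> 'I_k) (l : 'I_k) := [set v in W | h v == l].

Lemma cls_stable k W (h : 'I_d -> 'I_k) l : coloring e W h -> stableb e (cls W h l).
Proof.
move=> hc; apply/forallP=> u; apply/forallP=> v; apply/implyP; rewrite !inE.
case/andP=> /andP[uW /eqP hu] /andP[vW /eqP hv]; apply/negP=> euv.
have := hc u v uW vW euv; by rewrite hu hv eqxx.
Qed.

Definition mon k W (h : 'I_d -> 'I_k) : 'X_{1..n} := (\sum_(l < k) U_(rk (cls W h l)))%MM.

Lemma xmonE k W (h : 'I_d -> 'I_k) : coloring e W h -> xmon e K W h = 'X_[mon W h].
Proof.
move=> hc; rewrite /xmon /mon.
rewrite (big_morph (fun m => 'X_[m] : {mpoly K[n]}) (@mpolyXD _ _) (@mpolyX0 _ _)).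
by apply: eq_bigr => l _; rewrite xvarE //; exact: cls_stable.
Qed.

End Main.

End PA.
Import PA.

Module PB.

Section Kempe.
Variables (d : nat) (e : rel 'I_d).
Hypotheses (e_sym : ssrbool.symmetric e) (e_irr : ssrbool.irreflexive e).
Variables (k : nat) (W : {set 'I_d}).

Local Notation kstep := (kempe_step e W).
Local Notation crt := (clos_refl_trans _ kstep).
Local Notation kequiv := (kempe_equiv e W).
Local Notation col := (coloring e W).

Lemma col_ext (f f' : 'I_d -> 'I_k) : {in W, f =1 f'} -> col f -> col f'.
Proof. by move=> E hc u v uW vW euv; rewrite -!E //; apply: hc. Qed.

Lemma kstep_ext (f f' g : 'I_d -> 'I_k) : kstep f g -> {in W, f =1 f'} -> kstep f' g.
Proof.
case=> i [j [x]] /= [ij xV gE gc] E.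
have EV : [set v in W | (f v == i) || (f v == j)] = [set v in W | (f' v == i) || (f' v == j)].
  by apply/setP=> v; rewrite !inE; case vW: (v \in W) => //=; rewrite E.
exists i, j, x => /=; rewrite -EV; split=> // v vW; rewrite gE // E //.
Qed.

Lemma crt_ext (f g : 'I_d -> 'I_k) : crt f g -> forall f', {in W, f =1 f'} ->
  exists2 g', crt f' g' & {in W, g =1 g'}.
Proof.
elim=> {f g} [f g st|f|f g h _ IH1 _ IH2] f' E.
- by exists g; [apply: rt_step; apply: kstep_ext E|].
- by exists f'; [apply: rt_refl|].
- have [g' c1 E1] := IH1 _ E; have [h' c2 E2] := IH2 _ E1.
  by exists h' => //; apply: rt_trans c2.
Qed.

Lemma kequiv_refl (f : 'I_d -> 'I_k) : kequiv f f.
Proof. by exists f; [apply: rt_refl|]. Qed.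

Lemma kequiv_ext (f g g' : 'I_d -> 'I_k) : kequiv f g -> {in W, g =1 g'} -> kequiv f g'.
Proof. by case=> h c E E'; exists h => // v vW; rewrite E // E'. Qed.

Lemma kequiv_trans (f g h : 'I_d -> 'I_k) : kequiv f g -> kequiv g h -> kequiv f h.
Proof.
case=> h0 c0 E0 [h1 c1 E1].
have [h1' c1' E1'] := crt_ext c1 (f' := h0) (fun v vW => esym (E0 v vW)).
by exists h1'; [apply: rt_trans c1'|move=> v vW; rewrite -E1' // E1].
Qed.

Lemma kequiv_step (f g : 'I_d -> 'I_k) : kstep f g -> kequiv f g.
Proof. by move=> st; exists g; [apply: rt_step|]. Qed.

Lemma crt_col (f g : 'I_d -> 'I_k) : crt f g -> col f -> col g.
Proof. by elim=> // [f0 g0 [i [j [x]]] /= [] | f0 g0 h0 _ IH1 _ IH2 /IH1 /IH2]. Qed.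

Lemma kequiv_col (f g : 'I_d -> 'I_k) : kequiv f g -> col f -> col g.
Proof. by case=> h c E /(crt_col c); apply: col_ext. Qed.

Definition sw (a b c : 'I_k) : 'I_k := if c == a then b else if c == b then a else c.
Definition Vab (h : 'I_d -> 'I_k) (a b : 'I_k) := [set v in W | (h v == a) || (h v == b)].
Definition switch (h : 'I_d -> 'I_k) a b (S : {set 'I_d}) : 'I_d -> 'I_k :=
  fun v => if v \in S then sw a b (h v) else h v.

Definition closedS (h : 'I_d -> 'I_k) a b (S : {set 'I_d}) :=
  S \subset Vab h a b /\ forall u v, u \in S -> v \in Vab h a b -> e u v -> v \in S.

Lemma swK a b : a != b -> involutive (sw a b).
Proof.
move=> ab c; rewrite /sw.
case: (eqVneq c a) => [->|ca]; first by rewrite eq_sym (negbTE ab) eqxx.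
case: (eqVneq c b) => [->|cb]; first by rewrite eqxx.
by rewrite (negbTE ca) (negbTE cb).
Qed.

Lemma sw_inj a b : a != b -> injective (sw a b).
Proof. by move=> ab; apply: can_inj (swK ab). Qed.

Lemma sw_in a b c : (c == a) || (c == b) -> (sw a b c == a) || (sw a b c == b).
Proof.
rewrite /sw; case: (eqVneq c a) => [_|ca] /=; first by rewrite eqxx orbT.
by move=> /eqP ->; rewrite eqxx eqxx.
Qed.

Lemma switch_col h a b S : col h -> a != b -> closedS h a b S -> col (switch h a b S).
Proof.
move=> hc ab [sub cl] u v uW vW euv; rewrite /switch.
have hV w : w \in W -> w \notin S -> (h w == a) || (h w == b) -> w \in Vab h a b.
  by move=> wW _ hw; rewrite inE wW.
case uS: (u \in S); case vS: (v \in S).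
- by apply/negP=> /eqP /(sw_inj ab) /eqP; apply/negP/hc.
- have := subsetP sub u uS; rewrite inE uW /= => hu.
  case hv: ((h v == a) || (h v == b)).
    by have := cl u v uS (hV v vW (negbT vS) hv) euv; rewrite vS.
  by apply/negP=> /eqP E; move: (sw_in hu); rewrite E hv.
- have := subsetP sub v vS; rewrite inE vW /= => hv.
  case hu: ((h u == a) || (h u == b)).
    have evu : e v u by rewrite e_sym.
    by have := cl v u vS (hV u uW (negbT uS) hu) evu; rewrite uS.
  by apply/negP=> /eqP E; move: (sw_in hv); rewrite -E hu.
- exact: hc.
Qed.

Lemma switch_equiv_gen N : forall h (a b : 'I_k) (S : {set 'I_d}), (#|S| <= N)%N -> col h -> (a < b)%N ->
  closedS h a b S -> kequiv h (switch h a b S).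
Proof.
elim: N => [|N IH] h a b S szS hc ab cS; case: (set_0Vmem S) => [S0|[x xS]].
- by subst; apply: kequiv_ext (kequiv_refl h) _ => v _; rewrite /switch inE.
- by move: szS; rewrite leqn0 cards_eq0 => /eqP S0; rewrite S0 inE in xS.
- by subst; apply: kequiv_ext (kequiv_refl h) _ => v _; rewrite /switch inE.
have ab' : a != b by apply/eqP=> E; rewrite E ltnn in ab.
case: cS => subS clS.
set V := Vab h a b.
set adj := [rel u v | [&& u \in V, v \in V & e u v]].
set C := [set y | connect adj x y].
have xV : x \in V by apply: (subsetP subS).
have clV : closed adj V by move=> u v /and3P[-> -> _].
have CV : C \subset V by apply/subsetP=> y; rewrite inE => /(closed_connect clV) <-.
have clS' : closed adj S.
  move=> u v /and3P[uV vV euv]; apply/idP/idP => [uS|vS]; first exact: clS euv.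
  by apply: clS vS uV _; rewrite e_sym.
have CS : C \subset S by apply/subsetP=> y; rewrite inE => /(closed_connect clS') <-.
have xC : x \in C by rewrite inE connect0.
have Cadj u v : u \in C -> v \in V -> e u v -> v \in C.
  rewrite inE => cu vV euv; rewrite inE.
  have uV : u \in V by rewrite -(closed_connect clV cu).
  by apply: connect_trans cu (connect1 _); apply/and3P.
have cC : closedS h a b C by split.
set h1 := switch h a b C.
have h1c : col h1 by apply: switch_col.
have st : kstep h h1.
  exists a, b, x => /=; split=> // v vW; rewrite /h1 /switch.
  case vC: (v \in C) => //; have := subsetP CV v vC; rewrite inE => /andP[_].
  rewrite /sw; case: eqP => //= _ /eqP ->; by rewrite eqxx.
have EV : Vab h1 a b = V.
  apply/setP=> v; rewrite !inE /h1 /switch; case vW: (v \in W) => //=.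
  case vC: (v \in C) => //; have := subsetP CV v vC; rewrite inE vW /= => hv.
  by rewrite sw_in.
have cS1 : closedS h1 a b (S :\: C).
  split; first by rewrite EV; apply/subsetP=> v /setDP[/(subsetP subS)].
  move=> u v /setDP[uS uC]; rewrite EV => vV euv; apply/setDP; split.
    exact: clS euv.
  apply/negP=> vC.
  have uC' : u \in C by apply: (Cadj v u vC); [apply: (subsetP subS) | rewrite e_sym].
  by rewrite uC' in uC.
have sz1 : (#|S :\: C| <= N)%N.
  have E := cardsID C S.
  have : (0 < #|S :&: C|)%N by rewrite card_gt0; apply/set0Pn; exists x; rewrite inE xS xC.
  lia.
have := IH h1 a b _ sz1 h1c ab cS1.
move/(kequiv_trans (kequiv_step st)) => H; apply: (kequiv_ext H) => v vW.
rewrite /h1 /switch in_setD; case vC: (v \in C) => /=.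
  by rewrite (subsetP CS v vC).
by [].
Qed.

Lemma switch_equiv h (a b : 'I_k) (S : {set 'I_d}) : col h -> (a < b)%N ->
  closedS h a b S -> kequiv h (switch h a b S).
Proof. exact: (@switch_equiv_gen #|S|). Qed.

End Kempe.

End PB.
Import PB.

Module PC.
Local Open Scope ring_scope.

Section Ideal.
Variables (R : comNzRingType) (P : R -> Prop).

Lemma ideal0 : in_ideal_gen P 0.
Proof. by exists 0%N, (fun _ => 0), (fun _ => 0); split; [by case | by rewrite big_ord0]. Qed.

Lemma idealM c p : P p -> in_ideal_gen P (c * p).
Proof. by move=> Pp; exists 1%N, (fun _ => c), (fun _ => p); rewrite big_ord1. Qed.

Lemma idealD x y : in_ideal_gen P x -> in_ideal_gen P y -> in_ideal_gen P (x + y).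
Proof.
case=> n1 [c1 [g1 [P1 ->]]] [n2 [c2 [g2 [P2 ->]]]].
exists (n1 + n2)%N, (fun i => match split i with inl a => c1 a | inr b => c2 b end),
  (fun i => match split i with inl a => g1 a | inr b => g2 b end); split.
  by move=> i; case: (split i).
rewrite big_split_ord /=; congr (_ + _); apply: eq_bigr => i _.
  by rewrite (unsplitK (inl _ i)).
by rewrite (unsplitK (inr _ i)).
Qed.

Lemma ideal_mono (Q : R -> Prop) x : (forall y, P y -> Q y) -> in_ideal_gen P x -> in_ideal_gen Q x.
Proof. by move=> PQ [n [c [g [Pg ->]]]]; exists n, c, g; split=> // i; apply: PQ. Qed.
End Ideal.

Section PiJ.
Variables (K : fieldType) (d : nat) (e : rel 'I_d).
Hypotheses (e_sym : ssrbool.symmetric e) (e_irr : ssrbool.irreflexive e).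
Local Notation n := (nS e).
Local Notation PP := {mpoly K[n]}.

Local Notation pi := (@Defs.pi d e K).

Definition tw (j : 'I_d) : 'I_d.+1 := widen_ord (leqnSn d) j.
Definition pimg (A : {set 'I_d}) : {mpoly K[d.+1]} :=
  'X_(@ord_max d) * \prod_(j in A) 'X_(tw j).

Lemma piX (i : 'I_n) : pi ('X_i : PP) = pimg (val (enum_val i)).
Proof. by rewrite /pi /Defs.pi comp_mpolyXU -tnth_nth tnth_mktuple. Qed.

Lemma piM (p q : PP) : pi (p * q) = pi p * pi q.
Proof. by rewrite /pi /Defs.pi rmorphM. Qed.
Lemma piB (p q : PP) : pi (p - q) = pi p - pi q.
Proof. by rewrite /pi /Defs.pi rmorphB. Qed.

Lemma pi_xvar A : stableb e A -> pi (xvar e K A) = pimg A.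
Proof. by move=> sA; rewrite xvarE // piX rk_val. Qed.

Lemma ord2_cases (x : 'I_2) : (x == ord0) || (x == ord_max).
Proof. by case: x => [[|[|]]]. Qed.

Lemma xmon2 W' (h : 'I_d -> 'I_2) :
  xmon e K W' h = xvar e K (cls W' h ord0) * xvar e K (cls W' h ord_max).
Proof.
rewrite /xmon big_ord_recl big_ord1.
by have -> : lift ord0 ord0 = ord_max :> 'I_2 by apply/val_inj.
Qed.

Lemma pi_xmon2 W' (h : 'I_d -> 'I_2) : coloring e W' h ->
  pi (xmon e K W' h) = 'X_(@ord_max d) ^+ 2 * \prod_(j in W') 'X_(tw j).
Proof.
move=> hc; rewrite xmon2 piM !pi_xvar ?cls_stable // /pimg mulrACA -expr2.
rewrite -bigU /=.
  congr (_ * _); apply: eq_bigl => v; rewrite !inE.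
  by case: (v \in W') => //=; rewrite ord2_cases.
rewrite -setI_eq0; apply/eqP/setP => v; rewrite !inE.
by case: (v \in W'); case: (h v) => [[|[|]]].
Qed.

Lemma homogX2 (a b : 'I_n) : ('X_a * 'X_b : PP) \is 2.-homog.
Proof. rewrite -mpolyXD dhomogX; apply/eqP; exact: (etrans (mdegD _ _) (congr2 addn (mdeg1 a) (mdeg1 b))). Qed.

Lemma xmon2_homog W' (h : 'I_d -> 'I_2) : coloring e W' h -> xmon e K W' h \is 2.-homog.
Proof. by move=> hc; rewrite xmon2 !xvarE ?cls_stable // homogX2. Qed.

Lemma JG_IG2 (p : PP) : JG_gen (e := e) (K := K) p -> IG2 (e := e) (K := K) p.
Proof.
case=> W' [f [g [fc gc ->]]]; split.
  by rewrite dhomogD ?dhomogN ?xmon2_homog.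
by rewrite /in_IG piB !pi_xmon2 // subrr.
Qed.

Lemma pair_JG k W (f g : 'I_d -> 'I_k) (i j : 'I_k) :
  coloring e W f -> coloring e W g -> i != j ->
  (forall v, v \in W -> ((f v == i) || (f v == j)) = ((g v == i) || (g v == j))) ->
  (forall v, v \in W -> ~~ ((f v == i) || (f v == j)) -> g v = f v) ->
  in_ideal_gen (JG_gen (e := e) (K := K)) (xmon e K W f - xmon e K W g).
Proof.
move=> fc gc ij E Eo.
have split3 (h : 'I_d -> 'I_k) : xmon e K W h = xvar e K (cls W h i) * xvar e K (cls W h j)
   * \prod_(l | (l != i) && (l != j)) xvar e K (cls W h l).
  by rewrite /xmon (bigD1 i) //= (bigD1 j) /= ?mulrA // eq_sym.
have Er : \prod_(l | (l != i) && (l != j)) xvar e K (cls W f l) =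
          \prod_(l | (l != i) && (l != j)) xvar e K (cls W g l).
  apply: eq_bigr => l /andP[li lj]; congr xvar; apply/setP => v; rewrite !inE.
  case vW: (v \in W) => //=.
  case hf: ((f v == i) || (f v == j)).
    have hg := hf; rewrite E // in hg.
    case/orP: hf => /eqP ->; case/orP: hg => /eqP ->;
      by rewrite ?(eq_sym i) ?(eq_sym j) ?(negbTE li) ?(negbTE lj).
  by rewrite Eo // hf.
set V := [set v in W | (f v == i) || (f v == j)].
have VW : {subset V <= W} by move=> v; rewrite inE => /andP[].
have proj (h : 'I_d -> 'I_k) : coloring e W h ->
    (forall v, v \in W -> ((f v == i) || (f v == j)) = ((h v == i) || (h v == j))) ->
    [/\ coloring e V (fun v => if h v == i then ord0 else ord_max : 'I_2),
        cls V (fun v => if h v == i then ord0 else ord_max : 'I_2) ord0 = cls W h i &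
        cls V (fun v => if h v == i then ord0 else ord_max : 'I_2) ord_max = cls W h j].
  move=> hc hE.
  have hV v : v \in V -> (h v == i) || (h v == j).
    by rewrite inE => /andP[vW]; rewrite hE.
  split.
  - move=> u v uV vV euv; have := hc u v (VW u uV) (VW v vV) euv.
    have := hV u uV; have := hV v vV.
    by case: (eqVneq (h u) i) => [->|hui]; case: (eqVneq (h v) i) => [->|hvi] //=;
      rewrite ?eqxx //= => /eqP -> /eqP ->; rewrite eqxx.
  - apply/setP=> v; rewrite !inE; case: (eqVneq (h v) i) => [hvi|hvi] /=.
      case vW: (v \in W) => //=; rewrite eqxx andbT.
      by rewrite hE // hvi eqxx.
    by rewrite (_ : (ord_max == ord0 :> 'I_2) = false) ?andbF.
  - apply/setP=> v; rewrite !inE; case: (eqVneq (h v) i) => [hvi|hvi] /=.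
      by rewrite hvi (negbTE ij) (_ : (ord0 == ord_max :> 'I_2) = false) ?andbF.
    case vW: (v \in W) => //=; rewrite hE // (negbTE hvi) /=.
    by case: (h v == j).
have [fc2 f0 f1] := proj f fc (fun v _ => erefl).
have [gc2 g0 g1] := proj g gc E.
rewrite (split3 f) (split3 g) -Er -mulrBl mulrC.
apply: idealM; exists V, (fun v => if f v == i then ord0 else ord_max),
  (fun v => if g v == i then ord0 else ord_max); split=> //.
by rewrite !xmon2 f0 f1 g0 g1.
Qed.

End PiJ.

End PC.
Import PC.

Module PD.
Local Open Scope ring_scope.

Section Forward.
Variables (K : fieldType) (d : nat) (e : rel 'I_d).
Hypotheses (e_sym : ssrbool.symmetric e) (e_irr : ssrbool.irreflexive e).
Variables (k : nat) (W : {set 'I_d}).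
Local Notation kstep := (kempe_step e W).
Local Notation crt := (clos_refl_trans _ kstep).
Local Notation kequiv := (kempe_equiv e W).
Local Notation col := (coloring e W).
Local Notation JI := (in_ideal_gen (JG_gen (e := e) (K := K))).

Lemma cls_ext (h1 h2 : 'I_d -> 'I_k) l : {in W, h1 =1 h2} -> cls W h1 l = cls W h2 l.
Proof. by move=> E; apply/setP=> v; rewrite !inE; case vW: (v \in W) => //=; rewrite E. Qed.

Lemma xmon_ext (h1 h2 : 'I_d -> 'I_k) : {in W, h1 =1 h2} -> xmon e K W h1 = xmon e K W h2.
Proof. by move=> E; apply: eq_bigr => l _; rewrite -/(cls W h1 l) (cls_ext l E). Qed.

Lemma kstep_JG (f g : 'I_d -> 'I_k) : col f -> kstep f g -> JI (xmon e K W f - xmon e K W g).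
Proof.
move=> fc st; have gc := kequiv_col (kequiv_step st) fc.
case: st => i [j [x]] /= [ij xV gE _].
set V := [set v in W | (f v == i) || (f v == j)] in xV gE.
set adj := [rel u v | [&& u \in V, v \in V & e u v]] in gE.
have clV : closed adj V by move=> u v /and3P[-> -> _].
have ij' : i != j by apply/eqP=> E; rewrite E ltnn in ij.
have CV v : v \in [set y | connect adj x y] -> v \in V.
  by rewrite inE => /(closed_connect clV) <-.
apply: (@pair_JG K _ _ _ _ _ _ i j fc gc ij') => v vW; rewrite gE //.
  case vC: (v \in [set y | connect adj x y]); last by [].
  have := CV v vC; rewrite inE vW /= => ->.
  by case: (f v == i); rewrite eqxx ?orbT.
case vC: (v \in [set y | connect adj x y]) => //.
by have := CV v vC; rewrite inE vW /= => ->.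
Qed.

Lemma crt_JG (f g : 'I_d -> 'I_k) : crt f g -> col f -> JI (xmon e K W f - xmon e K W g).
Proof.
elim=> {f g} [f g st fc|f _|f g h c1 IH1 c2 IH2 fc].
- exact: kstep_JG.
- by rewrite subrr; apply: ideal0.
have -> : xmon e K W f - xmon e K W h = (xmon e K W f - xmon e K W g) + (xmon e K W g - xmon e K W h).
  by rewrite addrA subrK.
apply: idealD; first exact: IH1.
by apply: IH2; apply: crt_col c1 fc.
Qed.

Lemma kequiv_JG (f g : 'I_d -> 'I_k) : kequiv f g -> col f -> JI (xmon e K W f - xmon e K W g).
Proof. by case=> h c E fc; rewrite -(xmon_ext E); apply: crt_JG. Qed.

End Forward.

End PD.
Import PD.

Module PE.
Local Open Scope ring_scope.

Section Lin.
Variables (K : fieldType) (n : nat) (L : seq 'X_{1..n}) (w : 'X_{1..n} -> K).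
Hypothesis uL : uniq L.

Definition lin (p : {mpoly K[n]}) : K := \sum_(m <- L) p@_m * w m.

Lemma linD p q : lin (p + q) = lin p + lin q.
Proof. by rewrite /lin -big_split; apply: eq_bigr => m _; rewrite mcoeffD mulrDl. Qed.

Lemma linZ c p : lin (c *: p) = c * lin p.
Proof. by rewrite /lin mulr_sumr; apply: eq_bigr => m _; rewrite mcoeffZ mulrA. Qed.

Lemma lin0 : lin 0 = 0.
Proof. by rewrite /lin big1 // => m _; rewrite mcoeff0 mul0r. Qed.

Lemma lin_sum (I : Type) (r : seq I) (F : I -> {mpoly K[n]}) :
  lin (\sum_(x <- r) F x) = \sum_(x <- r) lin (F x).
Proof. by elim: r => [|x r IH]; rewrite ?big_nil ?lin0 // !big_cons linD IH. Qed.

Lemma linX m : lin 'X_[m] = if m \in L then w m else 0.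
Proof.
rewrite /lin; case: ifP => mL.
  rewrite (big_rem m) //= mcoeffX eqxx mul1r big1_seq ?addr0 // => m' /andP[_ m'L].
  rewrite mcoeffX; case: eqP => [E|]; last by rewrite mul0r.
  by move: (rem_uniq m uL) m'L; rewrite -E => /[swap]; rewrite mem_rem_uniqF.
rewrite big1_seq // => m' /andP[_ m'L]; rewrite mcoeffX; case: eqP => [E|]; last by rewrite mul0r.
by rewrite E m'L in mL.
Qed.
End Lin.

Lemma mpolyX_inj (K : fieldType) n (m1 m2 : 'X_{1..n}) : 'X_[m1] = 'X_[m2] :> {mpoly K[n]} -> m1 = m2.
Proof.
move=> E; have := congr1 (mcoeff m2) E; rewrite !mcoeffX eqxx.
by case: eqP => // _ /eqP; rewrite eq_sym oner_eq0.
Qed.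

Lemma mdeg_split n (m : 'X_{1..n}) k : mdeg m = k.+1 -> exists a m', m = (U_(a) + m')%MM /\ mdeg m' = k.
Proof.
move=> hm; have [a ha|h0] := pickP (fun a => 0 < m a)%N.
  exists a, (m - U_(a))%MM; split.
    by apply/mnmP => i; rewrite mnmDE mnmBE mnm1E; case: eqP => [<-|] //=; rewrite subnKC.
  have : mdeg m = mdeg (U_(a) + (m - U_(a)))%MM.
    by congr mdeg; apply/mnmP => i; rewrite mnmDE mnmBE mnm1E; case: eqP => [<-|] //=; rewrite subnKC.
  by rewrite mdegD mdeg1 hm => -[].
have : m = 0%MM by apply/mnmP => i; rewrite mnm0E; have := h0 i; rewrite /= lt0n => /negbFE/eqP.
by move=> E; rewrite E mdeg0 in hm.
Qed.

Lemma mdeg2 n (m : 'X_{1..n}) : mdeg m = 2 -> exists a b, m = (U_(a) + U_(b))%MM.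
Proof.
case/mdeg_split => a [m' [-> /mdeg_split [b [m'' [-> h0]]]]].
exists a, b; have : m'' == 0%MM by rewrite -mdeg_eq0 h0.
by move/eqP => ->; congr (_ + _)%MM; rewrite addmC add0m.
Qed.

Section PhiSec.
Variables (K : fieldType) (d : nat) (e : rel 'I_d).
Local Notation n := (nS e).
Local Notation pi := (@Defs.pi d e K).
Local Notation SS i := (val (@enum_val (stable_set e) _ i)).

Definition psi (i : 'I_n) : 'X_{1..d.+1} :=
  (U_(@ord_max d) + \sum_(j in SS i) U_(tw j))%MM.
Definition phi (m : 'X_{1..n}) : 'X_{1..d.+1} := (\sum_(i < n) (psi i *+ m i))%MM.

Lemma pimgX A : pimg K A = 'X_[U_(@ord_max d) + \sum_(j in A) U_(tw j)].
Proof.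
rewrite /pimg mpolyXD; congr (_ * _).
by rewrite (big_morph (fun m => 'X_[m] : {mpoly K[d.+1]}) (@mpolyXD _ _) (@mpolyX0 _ _)).
Qed.

Lemma piXm m : pi 'X_[m] = 'X_[phi m].
Proof.
rewrite /Defs.pi comp_mpolyX /phi.
rewrite (big_morph (fun m => 'X_[m] : {mpoly K[d.+1]}) (@mpolyXD _ _) (@mpolyX0 _ _)).
apply: eq_bigr => i _; rewrite tnth_mktuple -mpolyXn; congr (_ ^+ _).
exact: pimgX.
Qed.

Lemma phi2 a b : phi (U_(a) + U_(b))%MM = (psi a + psi b)%MM.
Proof.
apply: (@mpolyX_inj K); rewrite -piXm mpolyXD piM !piX !pimgX -mpolyXD.
by [].
Qed.

Lemma psi_tw i t : psi i (tw t) = (t \in SS i).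
Proof.
rewrite /psi mnmDE mnm1E mnm_sumE.
have -> : (@ord_max d == tw t) = false.
  by apply/negbTE; rewrite -val_eqE /= neq_ltn ltn_ord orbT.
rewrite add0n.
have E j : U_(tw j)%MM (tw t) = (j == t).
  by rewrite mnm1E -val_eqE /= val_eqE.
under eq_bigr => j _ do rewrite E.
case tS: (t \in SS i).
  by rewrite (bigD1 t) //= eqxx big1 // => j /andP[_ /negbTE ->].
by rewrite big1 // => j jS; apply/eqP; rewrite eqb0; apply/eqP=> E'; rewrite -E' jS in tS.
Qed.

End PhiSec.

End PE.
Import PE.

Module PF.
Local Open Scope ring_scope.

Lemma exists_idx n k (F : 'I_k -> 'I_n) (Q : pred 'I_k) (m : 'X_{1..n}) a :
  (\sum_(l | Q l) U_(F l))%MM = (m + U_(a))%MM -> exists2 l, Q l & F l = a.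
Proof.
move=> E; have := congr1 (fun m : 'X_{1..n} => m a) E; rewrite /= mnm_sumE mnmDE mnm1E eqxx addn1.
have [l /andP[Ql /eqP Fl]|h0] := pickP (fun l => Q l && (F l == a)); first by exists l.
rewrite big1 // => l Ql; rewrite mnm1E; have := h0 l; rewrite /= Ql /= => ->.
by [].
Qed.

Section Claim.
Variables (d : nat) (e : rel 'I_d).
Hypotheses (e_sym : ssrbool.symmetric e) (e_irr : ssrbool.irreflexive e).
Variables (k : nat) (W : {set 'I_d}).
Local Notation n := (nS e).
Local Notation kequiv := (kempe_equiv e W).
Local Notation col := (coloring e W).
Local Notation SS i := (val (@enum_val (stable_set e) _ i)).

Lemma swC (a b : 'I_k) : a != b -> sw a b =1 sw b a.
Proof.
move=> ab c; rewrite /sw.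
by case: (eqVneq c a) => ca; case: (eqVneq c b) => cb; subst => //=.
Qed.

Lemma switch_equiv2 h (a b : 'I_k) (S : {set 'I_d}) : col h -> a != b ->
  closedS e W h a b S -> kequiv h (switch h a b S).
Proof.
move=> hc ab cS; case: (ltngtP a b) => [lt|gt|eq].
- exact: switch_equiv.
- have EV : Vab W h a b = Vab W h b a by apply/setP=> v; rewrite !inE orbC.
  have cS' : closedS e W h b a S by case: cS => s1 s2; split; rewrite -EV.
  apply: kequiv_ext (switch_equiv e_sym hc gt cS') _ => v _.
  by rewrite /switch swC // eq_sym.
- by move/val_inj: eq ab => ->; rewrite eqxx.
Qed.

Definition inClass (f : 'I_d -> 'I_k) (m : 'X_{1..n}) :=
  exists h, col h /\ kequiv f h /\ mon e W h = m.

Lemma claim f (m' : 'X_{1..n}) (a b a' b' : 'I_n) :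
  inClass f (m' + U_(a) + U_(b))%MM ->
  (forall t, (t \in SS a) + (t \in SS b) = (t \in SS a') + (t \in SS b'))%N ->
  inClass f (m' + U_(a') + U_(b'))%MM.
Proof.
move=> [h [hc [hk hm]]] hS.
set r := fun l => rk e (cls W h l).
have [la _ ra] : exists2 l, true & r l = a.
  apply: (@exists_idx _ _ r predT (m' + U_(b))%MM).
  have -> : (\sum_(l | predT l) U_(r l))%MM = mon e W h by [].
  by rewrite hm; apply/mnmP=> i; rewrite !mnmDE; lia.
have hm1 : (\sum_(l | l != la) U_(r l))%MM = (m' + U_(b))%MM.
  apply: (@addmI _ U_(a)%MM); move: hm; rewrite /mon (bigD1 la) //= -/(r la) ra => ->.
  by apply/mnmP=> i; rewrite !mnmDE; lia.
have [lb lbla rb] := exists_idx hm1.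
have hm2 : (\sum_(l | (l != la) && (l != lb)) U_(r l))%MM = m'.
  apply: (@addmI _ U_(b)%MM); move: hm1; rewrite (bigD1 lb) //= rb => ->.
  by apply/mnmP=> i; rewrite !mnmDE; lia.
set A := cls W h la; set B := cls W h lb.
have sA : stableb e A by apply: cls_stable.
have sB : stableb e B by apply: cls_stable.
have EA : SS a = A by rewrite -ra rk_val.
have EB : SS b = B by rewrite -rb rk_val.
rewrite EA EB in hS.
set C := SS a'; set D := SS b'.
have sC : stableb e C by apply: val_stable.
have sD : stableb e D by apply: val_stable.
have AB t : ~~ ((t \in A) && (t \in B)).
  rewrite !inE; apply/negP => /andP[/andP[_ /eqP h1] /andP[_ /eqP h2]].
  by rewrite -h1 h2 eqxx in lbla.
have CD t : ((t \in A) || (t \in B)) = ((t \in C) || (t \in D)) /\ ~~ ((t \in C) && (t \in D)).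
  have := hS t; have := AB t.
  by case: (t \in A); case: (t \in B); case: (t \in C); case: (t \in D).
have stab (X : {set 'I_d}) u v : stableb e X -> u \in X -> v \in X -> ~~ e u v.
  by move=> /forallP/(_ u)/forallP/(_ v) H uX vX; move: H; rewrite uX vX.
have hA v : (v \in A) = (v \in W) && (h v == la) by rewrite inE.
have hB v : (v \in B) = (v \in W) && (h v == lb) by rewrite inE.
have EC : SS a' = C by [].
have ED : SS b' = D by [].
clearbody A B C D.
have alb : la != lb by rewrite eq_sym.
set h' := fun v => if (v \in A) || (v \in B) then (if v \in C then la else lb) else h v.
set S := [set v | ((v \in A) || (v \in B)) && ((v \in A) != (v \in C))].
have EV : Vab W h la lb = A :|: B by apply/setP => v; rewrite in_setU !inE hA hB andb_orr.
have cS : closedS e W h la lb S.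
  split; first by rewrite EV; apply/subsetP => v; rewrite !inE => /andP[].
  move=> u v; rewrite EV !inE => /andP[uAB uAC] vAB euv.
  have [uW huv] : u \in W /\ (forall w, w \in W -> e u w -> h u != h w).
    by move: uAB; rewrite hA hB => /orP[] /andP[uW _]; split=> // w wW; apply: hc.
  have vW : v \in W by move: vAB; rewrite hA hB => /orP[] /andP[].
  have hne := huv v vW euv.
  have Adiff : (u \in A) = ~~ (v \in A).
    move: uAB vAB hne; rewrite !hA !hB uW vW /=.
    by case: (eqVneq (h u) la) => [->|_]; case: (eqVneq (h v) la) => [->|_] //= /eqP -> /eqP ->; rewrite eqxx.
  have Cdiff : (u \in C) = ~~ (v \in C).
    have [cu du] := CD u; have [cv dv] := CD v.
    move: (stab C u v sC) (stab D u v sD); rewrite euv /=.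
    move: uAB vAB; rewrite cu cv.
    by case: (u \in C); case: (v \in C); case: (u \in D); case: (v \in D) => //= _ _ H1 H2;
      [move: (H1 isT isT) | move: (H1 isT isT) | move: (H1 isT isT) | move: (H1 isT isT) | move: (H2 isT isT)].
  by rewrite vAB /=; move: uAC; rewrite Adiff Cdiff; case: (v \in A); case: (v \in C).
have hsw := switch_equiv2 hc alb cS.
have E' : {in W, switch h la lb S =1 h'}.
  move=> v vW; rewrite /switch /h' inE; have [cd1 cd2] := CD v.
  have hvA : v \in A -> h v = la by rewrite hA => /andP[_ /eqP].
  have hvB : v \in B -> h v = lb by rewrite hB => /andP[_ /eqP].
  case vA: (v \in A); case vB: (v \in B) => //=.
  - by have := AB v; rewrite vA vB.
  - rewrite hvA //; case: (v \in C) => //=; by rewrite /sw eqxx.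
  - rewrite hvB //; move: cd1; rewrite vA vB /=; case: (v \in C) => //= _.
    by rewrite /sw (negbTE lbla) eqxx.
have h'c : col h' by apply: col_ext E' (switch_col e_sym hc alb cS).
exists h'; split=> //; split; first exact: kequiv_trans hk (kequiv_ext hsw E').
have cla : cls W h' la = C.
  apply/setP => v; rewrite !inE /h'; have [cd1 cd2] := CD v.
  case vC: (v \in C); move: cd1 cd2; rewrite vC.
    by rewrite orTb => vAB _; rewrite vAB eqxx andbT; move: vAB; rewrite hA hB => /orP[] /andP[].
  rewrite orFb => cd1 _; case vAB: ((v \in A) || (v \in B)); first by rewrite eq_sym (negbTE alb) andbF.
  by apply/negP => /andP[vW /eqP hv]; move: vAB; rewrite hA vW hv eqxx.
have clb : cls W h' lb = D.
  apply/setP => v; rewrite !inE /h'; have [cd1 cd2] := CD v.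
  case vD: (v \in D); move: cd1 cd2; rewrite vD.
    rewrite orbT andbT => vAB vC; rewrite vAB (negbTE vC) eqxx andbT.
    by move: vAB; rewrite hA hB => /orP[] /andP[].
  rewrite orbF => cd1 _; case vAB: ((v \in A) || (v \in B)).
    by move: cd1; rewrite vAB => <-; rewrite (negbTE alb) andbF.
  by apply/negP => /andP[vW /eqP hv]; move: vAB; rewrite hB vW hv eqxx orbT.
have clo l : l != la -> l != lb -> cls W h' l = cls W h l.
  move=> lla llb; apply/setP => v; rewrite !inE /h'.
  case vAB: ((v \in A) || (v \in B)); last by [].
  move: vAB; rewrite hA hB => /orP[] /andP[-> /eqP ->]; case: (v \in C);
    by rewrite ?(eq_sym la) ?(eq_sym lb) ?(negbTE lla) ?(negbTE llb).
rewrite /mon (bigD1 la) //= (bigD1 lb) //= cla clb -EC -ED !rk_enum.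
rewrite (eq_bigr (fun l => U_(r l))%MM); last first.
  by move=> l /andP[lla llb]; rewrite clo.
by rewrite hm2; apply/mnmP=> i; rewrite !mnmDE; lia.
Qed.

End Claim.

End PF.
Import PF.

Module PG.
Local Open Scope ring_scope.

Section Perm.
Variables (d : nat) (e : rel 'I_d).
Hypotheses (e_sym : ssrbool.symmetric e) (e_irr : ssrbool.irreflexive e).
Variables (k : nat) (W : {set 'I_d}).
Local Notation n := (nS e).
Local Notation kequiv := (kempe_equiv e W).
Local Notation col := (coloring e W).

Lemma mon_ext (h1 h2 : 'I_d -> 'I_k) : {in W, h1 =1 h2} -> mon e W h1 = mon e W h2.
Proof. by move=> E; apply: eq_bigr => l _; rewrite (cls_ext l E). Qed.

Lemma perm_gen N : forall h g : 'I_d -> 'I_k, (#|[set l | cls W h l != cls W g l]| <= N)%N ->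
  col h -> col g -> mon e W h = mon e W g -> kequiv h g.
Proof.
elim: N => [|N IH] h g szM hc gc hm.
all: have [v /andP[vW hv]|hall] := pickP (fun v => (v \in W) && (h v != g v)); last first.
  1,3: by apply: (kequiv_ext (kequiv_refl e W h)) => v vW; have := hall v; rewrite vW /= => /negbFE/eqP.
all: have vM : h v \in [set l | cls W h l != cls W g l] by
  rewrite inE; apply/negP => /eqP /setP /(_ v); rewrite !inE vW eqxx /= => /esym/eqP E; move: hv; rewrite E eqxx.
  by move: szM; rewrite leqn0 cards_eq0 => /eqP M0; rewrite M0 inE in vM.
set a := h v; set b := g v.
set M := [set l | cls W h l != cls W g l].
have ab : a != b by [].
have sum : (\sum_(l | predT l) U_(rk e (cls W h l)))%MM =
    (\sum_(l | l != b) U_(rk e (cls W g l)) + U_(rk e (cls W g b)))%MM.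
  have -> : (\sum_(l | predT l) U_(rk e (cls W h l)))%MM = mon e W h by [].
  by rewrite hm /mon (bigD1 b) //= addmC.
have [c _ rc] := exists_idx sum.
have Hc : cls W h c = cls W g b by apply: rk_inj rc; apply: cls_stable.
have ca : c = a.
  have : v \in cls W g b by rewrite inE vW eqxx.
  by rewrite -Hc inE => /andP[_ /eqP].
rewrite ca in Hc.
set h' := switch h a b (Vab W h a b).
have cS : closedS e W h a b (Vab W h a b) by split.
have hk1 : kequiv h h' := switch_equiv2 e_sym hc ab cS.
have h'c : col h' := switch_col e_sym hc ab cS.
have h'E w : w \in W -> h' w = sw a b (h w).
  move=> wW; rewrite /h' /switch inE wW /=; case: ifP => // hab.
  by rewrite /sw; move: hab; case: (h w == a); case: (h w == b).
have cls' l : cls W h' l = cls W h (sw a b l).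
  apply/setP => w; rewrite !inE; case wW: (w \in W) => //=.
  by rewrite h'E // (inv_eq (swK ab)).
have hm' : mon e W h' = mon e W g.
  rewrite -hm /mon; under eq_bigr => l _ do rewrite cls'.
  by rewrite [RHS](reindex_inj (sw_inj ab)).
have bM : b \in M.
  rewrite inE; apply/negP => /eqP /setP /(_ v); rewrite !inE vW eqxx /= => E.
  by move: E; rewrite ?eqxx ?(negbTE ab).
have sub : [set l | cls W h' l != cls W g l] \subset M :\ b.
  apply/subsetP => l; rewrite !inE cls' => ne; apply/andP; split.
    by apply/eqP => lb; move: ne; rewrite lb /sw (eq_sym b a) (negbTE ab) eqxx Hc eqxx.
  case: (eqVneq l a) => [->|la]; first by move: vM; rewrite inE.
  case: (eqVneq l b) => [lb|lb]; first by move: ne; rewrite lb /sw (eq_sym b a) (negbTE ab) eqxx Hc eqxx.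
  by move: ne; rewrite /sw (negbTE la) (negbTE lb).
have sz : (#|[set l | cls W h' l != cls W g l]| <= N)%N.
  have := subset_leq_card sub; have := cardsD1 b M; rewrite bM add1n; move: szM; rewrite -/M; lia.
exact: kequiv_trans hk1 (IH h' g sz h'c gc hm').
Qed.
End Perm.

End PG.
Import PG.

Module PH.
Local Open Scope ring_scope.

Section Back.
Variables (K : fieldType) (d : nat) (e : rel 'I_d).
Hypotheses (e_sym : ssrbool.symmetric e) (e_irr : ssrbool.irreflexive e).
Variables (k : nat) (W : {set 'I_d}) (f : 'I_d -> 'I_k).
Hypothesis fc : coloring e W f.
Local Notation n := (nS e).
Local Notation kequiv := (kempe_equiv e W).
Local Notation col := (coloring e W).
Local Notation pi := (@Defs.pi d e K).

Definition Lfin : seq 'X_{1..n} :=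
  undup (map (fun h : {ffun 'I_d -> 'I_k} => mon e W (fun v => h v))
    (filter (fun h : {ffun 'I_d -> 'I_k} => cb (col (fun v => h v) /\ kequiv f (fun v => h v)))
       (enum {ffun 'I_d -> 'I_k}))).

Lemma uLfin : uniq Lfin.
Proof. exact: undup_uniq. Qed.

Lemma memL m : (m \in Lfin) <-> inClass (e := e) W f m.
Proof.
rewrite mem_undup; split.
  case/mapP => h; rewrite mem_filter => /andP[/cbP [hc hk] _] ->.
  by exists (fun v => h v).
case=> h [hc [hk hm]]; apply/mapP; exists (finfun h).
  rewrite mem_filter mem_enum andbT; apply/cbP; split.
    by apply: col_ext hc => v _; rewrite ffunE.
  by apply: kequiv_ext hk _ => v _; rewrite ffunE.
by rewrite -hm; apply: mon_ext => v _; rewrite ffunE.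
Qed.

Lemma psi2_tw (a b : 'I_n) t :
  (psi a + psi b)%MM (tw t) = ((t \in val (enum_val a)) + (t \in val (enum_val b)))%N.
Proof. by rewrite mnmDE !psi_tw. Qed.

Definition Phi := lin Lfin (fun _ => (1 : K)).

Lemma PhiX m : Phi 'X_[m] = (m \in Lfin)%:R.
Proof. by rewrite /Phi linX ?uLfin //; case: (m \in Lfin). Qed.

Lemma Phi_gen (q : {mpoly K[n]}) (m' : 'X_{1..n}) : IG2 (e := e) (K := K) q -> Phi ('X_[m'] * q) = 0.
Proof.
case=> hq piq.
set M := undup [seq phi n0 | n0 <- msupp q].
set chi := fun mu => cb (exists n0, mdeg n0 = 2 /\ phi n0 = mu /\ inClass (e := e) W f (m' + n0)%MM).
have key n0 : n0 \in msupp q -> (m' + n0)%MM \in Lfin = chi (phi n0).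
  move=> n0q; have d2 : mdeg n0 = 2 by apply: (dhomog_mf hq).
  apply/idP/idP.
    by move/memL => H; apply/cbP; exists n0.
  case/cbP => n1 [d1 [phe H1]]; apply/memL.
  have [a [b E1]] := mdeg2 d1; have [a' [b' E0]] := mdeg2 d2.
  rewrite E0 addmA; rewrite E1 addmA in H1.
  apply: (claim e_sym H1) => t.
  have := congr1 (fun m : 'X_{1..d.+1} => m (tw t)) phe.
  by rewrite /= E1 E0 !(phi2 K) !psi2_tw.
have E1 : Phi ('X_[m'] * q) = \sum_(n0 <- msupp q) q@_n0 * ((m' + n0)%MM \in Lfin)%:R.
  rewrite {1}(mpolyE q) mulr_sumr /Phi lin_sum; apply: eq_bigr => n0 _.
  by rewrite -scalerAr -mpolyXD linZ -/Phi PhiX.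
have E2 : lin M (fun mu => (chi mu)%:R) (pi q) = \sum_(n0 <- msupp q) q@_n0 * (chi (phi n0))%:R.
  have -> : pi q = \sum_(n0 <- msupp q) q@_n0 *: 'X_[phi n0].
    rewrite /Defs.pi comp_mpolyEX; apply: eq_bigr => n0 _.
    by have := piXm K n0; rewrite /Defs.pi => ->.
  rewrite lin_sum; apply: eq_big_seq => n0 n0q; rewrite linZ linX ?undup_uniq //.
  by rewrite mem_undup map_f.
have E3 : lin M (fun mu => (chi mu)%:R) (pi q) = 0 by rewrite piq lin0.
rewrite E1; transitivity (lin M (fun mu => (chi mu)%:R) (pi q)); last exact: E3.
by rewrite E2; apply: eq_big_seq => n0 n0q; rewrite key.
Qed.

Lemma Phi_ideal (p : {mpoly K[n]}) : in_ideal_gen (IG2 (e := e) (K := K)) p -> Phi p = 0.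
Proof.
case=> N [c [gs [Pg ->]]]; rewrite /Phi lin_sum big1 // => i _.
rewrite {1}(mpolyE (c i)) mulr_suml lin_sum big1 // => m _.
by rewrite -scalerAl linZ -/Phi Phi_gen ?mulr0.
Qed.

Lemma backward (g : 'I_d -> 'I_k) : col g ->
  in_ideal_gen (IG2 (e := e) (K := K)) (xmon e K W f - xmon e K W g) -> kequiv f g.
Proof.
move=> gc /Phi_ideal; rewrite (xmonE K fc) (xmonE K gc) /Phi -scaleN1r linD linZ -/Phi !PhiX.
have -> : mon e W f \in Lfin by apply/memL; exists f; split=> //; split=> //; apply: kequiv_refl.
case gL: (mon e W g \in Lfin); last by move/eqP; rewrite mulr0 addr0 oner_eq0.
move=> _; case/memL: gL => h [hc [hk hm]].
apply: kequiv_trans hk _.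
exact: (perm_gen (N := #|[set l | cls W h l != cls W g l]|) e_sym).
Qed.

End Back.

End PH.
Import PH.

Local Open Scope ring_scope.

Theorem theorem5p1 (K : fieldType) (d : nat) (e : rel 'I_d)
  (e_sym : ssrbool.symmetric e) (e_irr : ssrbool.irreflexive e)
  (k : nat) (k_ge1 : (0 < k)%N) (W : {set 'I_d}) (f g : 'I_d -> 'I_k)
  (f_col : coloring e W f) (g_col : coloring e W g) :
  (kempe_equiv e W f g <->
     in_ideal_gen (IG2 (e := e) (K := K)) (xmon e K W f - xmon e K W g)) /\
  (in_ideal_gen (IG2 (e := e) (K := K)) (xmon e K W f - xmon e K W g) <->
     in_ideal_gen (JG_gen (e := e) (K := K)) (xmon e K W f - xmon e K W g)).
Proof.
have fwd : kempe_equiv e W f g ->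
    in_ideal_gen (JG_gen (e := e) (K := K)) (xmon e K W f - xmon e K W g).
  by move=> H; apply: kequiv_JG.
have j2i : in_ideal_gen (JG_gen (e := e) (K := K)) (xmon e K W f - xmon e K W g) ->
    in_ideal_gen (IG2 (e := e) (K := K)) (xmon e K W f - xmon e K W g).
  by apply: ideal_mono => p; apply: JG_IG2.
have bwd : in_ideal_gen (IG2 (e := e) (K := K)) (xmon e K W f - xmon e K W g) ->
    kempe_equiv e W f g.
  exact: backward.
split; split.
- by move=> H; apply: j2i; apply: fwd.
- exact: bwd.
- by move=> H; apply: fwd; apply: bwd.
- exact: j2i.
Qed.
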